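(* Let $u_0\in\ell^\infty_+(\mathbb{Z})$ with $\frac12\le u_0\le1$, let $\Psi_*$ be a creation operator with jump sequence $d\le L$, and $G_\beta(u)=\frac{\beta}{|\beta|}u^\beta$. 1. Let $\beta<0$ and let $u$ be a classical solution of $\partial_tu=\Delta G_\beta(u)$, $u(0)=\Psi_*u_0$, with $u\le1$ and $u(t,\cdot)\ge c(1\wedge t^{\frac1{1-\beta}})$ for all $t\ge0$, where $c>0$ depends only on $\beta,L$. Then for every $T>0$ there is $C=C(\beta,L,T)$ with $|u(t_2,k)-u(t_1,k)|\le C|t_2-t_1|^{\frac1{1-\beta}}$ for all $t_1,t_2\in[0,T]$, $k\in\mathbb{Z}$. 2. Let $\beta\in(0,1]$ and let $u$ be a classical solution of the same problem with $0\le u\le1$. Then $|u(t_2,k)-u(t_1,k)|\le4|t_2-t_1|$ for all $t_1,t_2\ge0$, $k\in\mathbb{Z}$.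
   Context: $\Delta v(k)=v(k-1)-2v(k)+v(k+1)$. Creation operator: for strictly increasing $\Psi:\mathbb{Z}\to\mathbb{Z}$, $\Psi_*x(\Psi(k))=x(k)$, $\Psi_*x(l)=0$ off $\Psi(\mathbb{Z})$; jump sequence = gaps $\Psi(k+1)-\Psi(k)-1$. Classical solution: $u\in C^0([0,\infty);\ell^\infty_+(\mathbb{Z}))$ with the initial datum, $u(\cdot,k)\in C^1((0,\infty))$ positive and satisfying the equation pointwise. *)

(* Defs.v *)
From Stdlib Require Import Reals ZArith ClassicalEpsilon.
From Coquelicot Require Import Coquelicot.
Open Scope R_scope.

Definition lap (v : Z -> R) (k : Z) : R :=
  v (k - 1)%Z - 2 * v k + v (k + 1)%Z.

(* nonnegative power with the convention 0^a = 0 (used for a > 0, x >= 0);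
   Stdlib's Rpower 0 a = 1, which is why we do not use it at 0. *)
Definition powp (x a : R) : R :=
  if Req_EM_T x 0 then 0 else Rpower x a.

Definition Gb (beta x : R) : R := (beta / Rabs beta) * Rpower x beta.

Definition strictly_increasing (Psi : Z -> Z) : Prop :=
  forall k l : Z, (k < l)%Z -> (Psi k < Psi l)%Z.

(* creation operator: (Psi_* x)(Psi k) = x k, and 0 off the image of Psi *)
Definition creation (Psi : Z -> Z) (x : Z -> R) (l : Z) : R :=
  match excluded_middle_informative (exists k, Psi k = l) with
  | left H => x (proj1_sig (constructive_indefinite_description _ H))
  | right _ => 0
  end.

Definition jump (Psi : Z -> Z) (k : Z) : Z := (Psi (k + 1) - Psi k - 1)%Z.

Definition linf_plus (v : Z -> R) : Prop :=
  (forall k, 0 <= v k) /\ exists M, forall k, Rabs (v k) <= M.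

Definition classical_solution (beta : R) (init : Z -> R) (u : R -> Z -> R) : Prop :=
  (* u in C^0([0,oo); l^infty_+(Z)) *)
  (forall t, 0 <= t -> linf_plus (u t)) /\
  (forall t, 0 <= t -> forall eps, 0 < eps -> exists delta, 0 < delta /\
      forall s, 0 <= s -> Rabs (s - t) < delta ->
        forall k, Rabs (u s k - u t k) <= eps) /\
  (forall k, u 0 k = init k) /\
  (forall t k, 0 < t -> 0 < u t k) /\
  (forall k t, 0 < t ->
      ex_derive (fun s => u s k) t /\
      continuous (fun s => Derive (fun s' => u s' k) s) t) /\
  (forall k t, 0 < t ->
      Derive (fun s => u s k) t = lap (fun j => Gb beta (u t j)) k).

(* Main.v *)
Require Import Defs.
From Stdlib Require Import Reals ZArith Lra.
From Coquelicot Require Import Coquelicot.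
Open Scope R_scope.

Lemma exp_mono x y : x <= y -> exp x <= exp y.
Proof. intros [H|H]; [left; apply exp_increasing; auto | subst; lra]. Qed.

Lemma core (f g df dg : R -> R) a b : 0 < a <= b ->
  (forall t, a <= t <= b -> is_derive f t (df t)) ->
  (forall t, a <= t <= b -> is_derive g t (dg t)) ->
  (forall t, a <= t <= b -> Rabs (df t) <= dg t) ->
  Rabs (f b - f a) <= g b - g a.
Proof.
  intros Hab Hf Hg Hb.
  assert (Hmin : Rmin a b = a) by (apply Rmin_left; lra).
  assert (Hmax : Rmax a b = b) by (apply Rmax_right; lra).
  assert (Hc : forall h dh, (forall t, a <= t <= b -> is_derive h t (dh t)) ->
     forall x, Rmin a b <= x <= Rmax a b -> continuity_pt h x).
  { intros h dh Hh x Hx. apply continuity_pt_filterlim.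
    apply (ex_derive_continuous (K:=R_AbsRing) (V:=R_NormedModule)).
    exists (dh x). apply Hh. rewrite Hmin, Hmax in Hx. exact Hx.
  }
  assert (H1 : forall t, a <= t <= b -> is_derive (fun t => f t - g t) t (df t - dg t)).
  { intros t Ht. apply (is_derive_minus f g t (df t) (dg t)); auto. }
  assert (H2 : forall t, a <= t <= b -> is_derive (fun t => f t + g t) t (df t + dg t)).
  { intros t Ht. apply (is_derive_plus f g t (df t) (dg t)); auto. }
  destruct (MVT_gen (fun t => f t - g t) a b (fun t => df t - dg t)) as [c1 [Hc1 E1]].
  { intros x Hx. rewrite Hmin, Hmax in Hx. apply H1. lra. }
  { apply (Hc _ (fun t => df t - dg t) H1). }
  destruct (MVT_gen (fun t => f t + g t) a b (fun t => df t + dg t)) as [c2 [Hc2 E2]].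
  { intros x Hx. rewrite Hmin, Hmax in Hx. apply H2. lra. }
  { apply (Hc _ (fun t => df t + dg t) H2). }
  rewrite Hmin, Hmax in Hc1, Hc2.
  pose proof (Hb c1 Hc1) as B1. pose proof (Hb c2 Hc2) as B2.
  apply Rabs_le_between in B1. apply Rabs_le_between in B2.
  apply Rabs_le_between. simpl in E1, E2.
  assert ((df c1 - dg c1) * (b - a) <= 0) by nra.
  assert ((df c2 + dg c2) * (b - a) >= 0) by nra.
  lra.
Qed.

Lemma zero_ext (f : R -> R) t2 B : 0 < t2 ->
  (forall eps, 0 < eps -> exists delta, 0 < delta /\
      forall s, 0 <= s -> Rabs (s - 0) < delta -> Rabs (f s - f 0) <= eps) ->
  (forall s, 0 < s < t2 -> Rabs (f t2 - f s) <= B) ->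
  Rabs (f t2 - f 0) <= B.
Proof.
  intros Ht Hc Hb. apply Rle_plus_epsilon. intros eps He.
  destruct (Hc eps He) as [d [Hd Hs]].
  set (s := Rmin (d/2) (t2/2)).
  assert (0 < s) by (unfold s; apply Rmin_glb_lt; lra).
  assert (s <= d/2) by apply Rmin_l. assert (s <= t2/2) by apply Rmin_r.
  assert (A1 := Hb s ltac:(lra)).
  assert (A2 := Hs s ltac:(lra) ltac:(rewrite Rminus_0_r, Rabs_pos_eq; lra)).
  replace (f t2 - f 0) with ((f t2 - f s) + (f s - f 0)) by ring.
  eapply Rle_trans; [apply Rabs_triang|lra].
Qed.

Lemma rpow_ge_self x a : 0 < x <= 1 -> 0 < a <= 1 -> x <= Rpower x a.
Proof.
  intros Hx Ha. unfold Rpower. rewrite <- (exp_ln x) at 1 by lra.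
  apply exp_mono. assert (ln x <= 0).
  { rewrite <- ln_1. apply ln_le; lra. } nra.
Qed.

Lemma subadd t1 t2 a : 0 < t1 < t2 -> 0 < a <= 1 ->
  Rpower t2 a - Rpower t1 a <= Rpower (t2 - t1) a.
Proof.
  intros Ht Ha. set (s := t2 - t1).
  assert (Hx : t1 = (t1 / t2) * t2) by (field; lra).
  assert (Hy : s = (s / t2) * t2) by (unfold s; field; lra).
  assert (0 < t1/t2 <= 1).
  { split. apply Rdiv_lt_0_compat; lra. apply Rmult_le_reg_r with t2; [lra|].
    unfold Rdiv. rewrite Rmult_assoc, Rinv_l; lra. }
  assert (0 < s/t2 <= 1).
  { unfold s. split. apply Rdiv_lt_0_compat; lra. apply Rmult_le_reg_r with t2; [lra|].
    unfold Rdiv. rewrite Rmult_assoc, Rinv_l; lra. }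
  assert (E1 : Rpower t1 a = Rpower (t1/t2) a * Rpower t2 a).
  { rewrite Hx at 1. rewrite Rpower_mult_distr; lra. }
  assert (E2 : Rpower s a = Rpower (s/t2) a * Rpower t2 a).
  { rewrite Hy at 1. rewrite Rpower_mult_distr; lra. }
  pose proof (rpow_ge_self (t1/t2) a ltac:(lra) Ha).
  pose proof (rpow_ge_self (s/t2) a ltac:(lra) Ha).
  assert (t1/t2 + s/t2 = 1) by (unfold s; field; lra).
  assert (0 < Rpower t2 a) by apply exp_pos.
  rewrite E1, E2. nra.
Qed.

Lemma rpow_anti x y b : 0 < x <= y -> b <= 0 -> Rpower y b <= Rpower x b.
Proof. intros H Hb. unfold Rpower. apply exp_mono.
  assert (ln x <= ln y) by (apply ln_le; lra). nra. Qed.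

Lemma powp_pos t a : 0 < t -> powp t a = Rpower t a.
Proof. intros H. unfold powp. destruct (Req_EM_T t 0); [lra|auto]. Qed.

Lemma lap_bound (v : Z -> R) A k : (forall j, Rabs (v j) <= A) -> Rabs (lap v k) <= 4 * A.
Proof. intros H. unfold lap. pose proof (H (k-1)%Z). pose proof (H k). pose proof (H (k+1)%Z).
  apply Rabs_le_between in H0. apply Rabs_le_between in H1. apply Rabs_le_between in H2.
  apply Rabs_le_between. lra. Qed.

Lemma part2 :
  (forall (beta : R) (L : Z) (u0 : Z -> R) (Psi : Z -> Z) (u : R -> Z -> R),
      0 < beta <= 1 ->
      (forall k, 1/2 <= u0 k <= 1) ->
      strictly_increasing Psi ->
      (forall k, (jump Psi k <= L)%Z) ->
      classical_solution beta (creation Psi u0) u ->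
      (forall t k, 0 <= t -> 0 <= u t k <= 1) ->
      forall (t1 t2 : R) (k : Z), 0 <= t1 -> 0 <= t2 ->
        Rabs (u t2 k - u t1 k) <= 4 * Rabs (t2 - t1)).
Proof.
  intros beta L u0 Psi u Hb Hu0 HPsi HL Hsol Hu t1 t2 k Ht1 Ht2.
  destruct Hb as [Hb0 Hb1].
  destruct Hsol as [Hlinf [Hcont [Hinit [Hpos [HC1 Heq]]]]].
  assert (Gb1 : forall t j, 0 < t -> Rabs (Gb beta (u t j)) <= 1).
  { intros t j Ht. unfold Gb. rewrite (Rabs_pos_eq beta) by lra.
    replace (beta / beta) with 1 by (field; lra). rewrite Rmult_1_l.
    pose proof (Hpos t j Ht). pose proof (Hu t j ltac:(lra)).
    assert (ln (u t j) <= 0) by (rewrite <- ln_1; apply ln_le; lra).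
    rewrite Rabs_pos_eq by (left; apply exp_pos).
    unfold Rpower. rewrite <- exp_0. apply exp_mono. nra. }
  assert (key : forall a b, 0 < a <= b -> Rabs (u b k - u a k) <= 4 * b - 4 * a).
  { intros a b Hab.
    apply (core (fun s => u s k) (fun s => 4 * s) (fun s => Derive (fun s => u s k) s) (fun _ => 4)).
    - lra.
    - intros t Ht. apply Derive_correct. apply HC1. lra.
    - intros t Ht. auto_derive; auto; ring.
    - intros t Ht. rewrite Heq by lra.
      eapply Rle_trans. apply lap_bound with (A := 1). intros j; apply Gb1; lra. lra. }
  assert (key2 : forall a b, 0 <= a <= b -> Rabs (u b k - u a k) <= 4 * (b - a)).
  { intros a b Hab. destruct (Req_dec a b) as [E|NE].
    { subst. rewrite Rminus_eq_0, Rabs_R0. lra. }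
    destruct (Req_dec a 0) as [Z0|NZ].
    - subst a. apply (zero_ext (fun s => u s k) b (4 * (b - 0))). lra.
      + intros eps He. destruct (Hcont 0 (Rle_refl 0) eps He) as [d [Hd Hs]].
        exists d. split; [exact Hd|]. intros s Hs0 Hsd. apply Hs; auto.
      + intros s Hs1. eapply Rle_trans. apply key. lra. lra.
    - replace (4 * (b - a)) with (4*b - 4*a) by ring. apply key. lra. }
  destruct (Rle_dec t1 t2).
  - rewrite (Rabs_pos_eq (t2 - t1)) by lra. apply key2. lra.
  - rewrite Rabs_minus_sym, (Rabs_minus_sym t2), (Rabs_pos_eq (t1 - t2)) by lra. apply key2. lra.
Qed.

Lemma part1 :
  (forall (beta : R) (L : Z) (c T : R),
      beta < 0 -> 0 < c -> 0 < T ->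
      exists C : R,
        forall (u0 : Z -> R) (Psi : Z -> Z) (u : R -> Z -> R),
          (forall k, 1/2 <= u0 k <= 1) ->
          strictly_increasing Psi ->
          (forall k, (jump Psi k <= L)%Z) ->
          classical_solution beta (creation Psi u0) u ->
          (forall t k, 0 <= t -> u t k <= 1) ->
          (forall t k, 0 <= t -> c * Rmin 1 (powp t (1 / (1 - beta))) <= u t k) ->
          forall (t1 t2 : R) (k : Z), 0 <= t1 <= T -> 0 <= t2 <= T ->
            Rabs (u t2 k - u t1 k) <= C * powp (Rabs (t2 - t1)) (1 / (1 - beta))).
Proof.
  intros beta L c T Hb Hc HT.
  set (al := 1 / (1 - beta)).
  assert (Hal : 0 < al < 1).
  { unfold al. split. apply Rdiv_lt_0_compat; lra.
    apply Rmult_lt_reg_r with (1 - beta); [lra|]. unfold Rdiv.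
    rewrite Rmult_assoc, Rinv_l by lra. lra. }
  assert (Halb : al * beta = al - 1) by (unfold al; field; lra).
  set (P := Rpower T al). set (M := Rmax 1 P).
  assert (HM1 : 1 <= M) by apply Rmax_l. assert (HMP : P <= M) by apply Rmax_r.
  set (c' := c / M).
  assert (Hc' : 0 < c') by (apply Rdiv_lt_0_compat; lra).
  set (K := 4 * Rpower c' beta / al).
  assert (HK : 0 <= K).
  { unfold K. apply Rlt_le, Rdiv_lt_0_compat; [|lra]. pose proof (exp_pos (beta * ln c')). unfold Rpower. lra. }
  exists K.
  intros u0 Psi u Hu0 HPsi HL Hsol Hu Hlow t1 t2 k Ht1 Ht2.
  destruct Hsol as [Hlinf [Hcont [Hinit [Hpos [HC1 Heq]]]]].
  assert (Low : forall t j, 0 < t <= T -> c' * Rpower t al <= u t j).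
  { intros t j Ht. eapply Rle_trans; [|apply Hlow; lra].
    rewrite powp_pos by lra.
    assert (Hp : 0 < Rpower t al) by apply exp_pos.
    assert (Hp2 : Rpower t al <= P) by (apply Rle_Rpower_l; lra).
    assert (HiM : M * / M = 1) by (field; lra).
    assert (HiM2 : 0 < / M) by (apply Rinv_0_lt_compat; lra).
    unfold c', Rdiv. rewrite Rmult_assoc. apply Rmult_le_compat_l; [lra|].
    apply Rmin_glb; nra. }
  assert (Gbnd : forall t j, 0 < t <= T ->
     Rabs (Gb beta (u t j)) <= Rpower c' beta * Rpower t (al - 1)).
  { intros t j Ht. unfold Gb. rewrite (Rabs_left beta) by lra.
    replace (beta / - beta) with (-1) by (field; lra).
    rewrite Rabs_mult. replace (Rabs (-1)) with 1 by (unfold Rabs; destruct (Rcase_abs (-1)); lra). rewrite Rmult_1_l.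
    rewrite Rabs_pos_eq by (left; apply exp_pos).
    assert (Hp : 0 < Rpower t al) by apply exp_pos.
    eapply Rle_trans. apply rpow_anti. split; [|apply Low; auto]. nra. lra.
    rewrite <- Rpower_mult_distr by auto. rewrite Rpower_mult, Halb. lra. }
  assert (key : forall a b, 0 < a <= b -> b <= T ->
      Rabs (u b k - u a k) <= K * Rpower b al - K * Rpower a al).
  { intros a b Hab HbT.
    apply (core (fun s => u s k) (fun s => K * Rpower s al)
             (fun s => Derive (fun s => u s k) s) (fun s => K * (al * Rpower s (al - 1)))).
    - lra.
    - intros t Ht. apply Derive_correct. apply HC1. lra.
    - intros t Ht. apply is_derive_scal. apply is_derive_Reals.
      apply derivable_pt_lim_power. lra.
    - intros t Ht. rewrite Heq by lra.
      eapply Rle_trans. apply lap_bound. intros j; apply Gbnd; lra.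
      unfold K. right. field. lra. }
  assert (key2 : forall a b, 0 <= a < b -> b <= T ->
      Rabs (u b k - u a k) <= K * Rpower (b - a) al).
  { intros a b Hab HbT.
    destruct (Req_dec a 0) as [Z0|NZ].
    - subst a. rewrite Rminus_0_r.
      apply (zero_ext (fun s => u s k) b (K * Rpower b al)). lra.
      + intros eps He. destruct (Hcont 0 (Rle_refl 0) eps He) as [d [Hd Hs]].
        exists d. split; [exact Hd|]. intros s Hs0 Hsd. apply Hs; auto.
      + intros s Hs1. eapply Rle_trans. apply key. lra. lra.
        assert (0 < Rpower s al) by apply exp_pos. nra.
    - eapply Rle_trans. apply key. lra. lra.
      pose proof (subadd a b al ltac:(lra) ltac:(lra)). nra. }
  destruct (Req_dec t1 t2) as [E|NE].
  { subst. rewrite !Rminus_eq_0, Rabs_R0. unfold powp.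
    destruct (Req_EM_T 0 0); [lra|congruence]. }
  rewrite powp_pos by (apply Rabs_pos_lt; lra).
  destruct (Rle_dec t1 t2).
  - rewrite (Rabs_pos_eq (t2 - t1)) by lra. apply key2; lra.
  - rewrite Rabs_minus_sym, (Rabs_minus_sym t2), (Rabs_pos_eq (t1 - t2)) by lra. apply key2; lra.
Qed.
Theorem lemma4p4 :
  (forall (beta : R) (L : Z) (c T : R),
      beta < 0 -> 0 < c -> 0 < T ->
      exists C : R,
        forall (u0 : Z -> R) (Psi : Z -> Z) (u : R -> Z -> R),
          (forall k, 1/2 <= u0 k <= 1) ->
          strictly_increasing Psi ->
          (forall k, (jump Psi k <= L)%Z) ->
          classical_solution beta (creation Psi u0) u ->
          (forall t k, 0 <= t -> u t k <= 1) ->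
          (forall t k, 0 <= t -> c * Rmin 1 (powp t (1 / (1 - beta))) <= u t k) ->
          forall (t1 t2 : R) (k : Z), 0 <= t1 <= T -> 0 <= t2 <= T ->
            Rabs (u t2 k - u t1 k) <= C * powp (Rabs (t2 - t1)) (1 / (1 - beta)))
  /\
  (forall (beta : R) (L : Z) (u0 : Z -> R) (Psi : Z -> Z) (u : R -> Z -> R),
      0 < beta <= 1 ->
      (forall k, 1/2 <= u0 k <= 1) ->
      strictly_increasing Psi ->
      (forall k, (jump Psi k <= L)%Z) ->
      classical_solution beta (creation Psi u0) u ->
      (forall t k, 0 <= t -> 0 <= u t k <= 1) ->
      forall (t1 t2 : R) (k : Z), 0 <= t1 -> 0 <= t2 ->
        Rabs (u t2 k - u t1 k) <= 4 * Rabs (t2 - t1)).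
Proof. split; [exact part1 | exact part2]. Qed.
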